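(* For every $P \in S$ of degree (in $x$) greater than $0$, one has $C_S(P) \cap R = K$.
   Context: Standing conventions: $K$ is a field, $R = K[y]$, $\sigma$ is a $K$-algebra endomorphism of $R$ with $\deg_y(\sigma(y)) > 1$, and $\delta$ is a $K$-linear $\sigma$-derivation of $R$, i.e. $\delta(ab) = \sigma(a)\delta(b) + \delta(a)b$. $S = R[x;\sigma,\delta]$ is the Ore extension (polynomials $\sum r_i x^i$, $r_i\in R$, with $xr = \sigma(r)x + \delta(r)$). Degree means degree in $x$. $C_S(P)$ is the centralizer of $P$ in $S$. *)

(* Defs.v *)
From HB Require Import structures.
From mathcomp Require Import all_boot all_order all_algebra.
Set Implicit Arguments. Unset Strict Implicit. Unset Printing Implicit Defensive.
Import GRing.Theory.
Local Open Scope ring_scope.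

(* Ore extension S = R[x; sigma, delta] with R = {poly K} (variable y).
   An element sum_i r_i x^i (coefficients on the LEFT) is represented by the
   polynomial P : {poly {poly K}} with P`_i = r_i (the outer variable is x).
   Addition is that of {poly {poly K}}; multiplication is the Ore product
   determined by x r = sigma(r) x + delta(r). *)

(* left multiplication by x:  x * (sum c_k x^k) = sum (sigma c_k x^(k+1) + delta c_k x^k) *)
Definition ore_xmul (K : fieldType) (sigma delta : {poly K} -> {poly K})
  (q : {poly {poly K}}) : {poly {poly K}} :=
  'X * map_poly sigma q + map_poly delta q.

(* Ore product: (sum a_i x^i) * Q = sum a_i (x^i Q) *)
Definition ore_mul (K : fieldType) (sigma delta : {poly K} -> {poly K})
  (p q : {poly {poly K}}) : {poly {poly K}} :=
  \sum_(i < size p) (p`_i)%:P * iter i (ore_xmul sigma delta) q.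

Definition ore_centralizer (K : fieldType) (sigma delta : {poly K} -> {poly K})
  (P : {poly {poly K}}) : {poly {poly K}} -> Prop :=
  fun Q => ore_mul sigma delta Q P = ore_mul sigma delta P Q.

(* Main.v *)
Require Import Defs.
From HB Require Import structures.
From mathcomp Require Import all_boot all_order all_algebra.
From mathcomp Require Import zify.
Import GRing.Theory.
Local Open Scope ring_scope.

Theorem lemma2p2 (K : fieldType) (sigma delta : {poly K} -> {poly K})
  (sigma_add : forall a b, sigma (a + b) = sigma a + sigma b)
  (sigma_mul : forall a b, sigma (a * b) = sigma a * sigma b)
  (sigma_one : sigma 1 = 1)
  (sigma_lin : forall (c : K) a, sigma (c *: a) = c *: sigma a)
  (sigma_deg : (1 < (size (sigma 'X)).-1)%N)
  (delta_add : forall a b, delta (a + b) = delta a + delta b)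
  (delta_lin : forall (c : K) a, delta (c *: a) = c *: delta a)
  (delta_der : forall a b, delta (a * b) = sigma a * delta b + delta a * b)
  (P : {poly {poly K}}) (hP : (0 < (size P).-1)%N) :
  forall r : {poly K},
    ore_centralizer sigma delta P (r%:P) <-> exists c : K, r = c%:P.
Proof.
have s0 : sigma 0 = 0.
  have h := sigma_add 0 0; rewrite addr0 in h.
  by apply: (addrI (sigma 0)); rewrite addr0 -h.
have d0 : delta 0 = 0.
  have h := delta_add 0 0; rewrite addr0 in h.
  by apply: (addrI (delta 0)); rewrite addr0 -h.
have d1 : delta 1 = 0.
  have h := delta_der 1 1; rewrite !mulr1 sigma_one mul1r in h.
  by apply: (addrI (delta 1)); rewrite addr0 -h.
have sC : forall c : K, sigma c%:P = c%:P.
  by move=> c; rewrite -alg_polyC sigma_lin sigma_one.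
have dC : forall c : K, delta c%:P = 0.
  by move=> c; rewrite -alg_polyC delta_lin d1 scaler0.
have scomp : forall p, sigma p = p \Po sigma 'X.
  elim/poly_ind => [|p c IH]; first by rewrite s0 comp_poly0.
  by rewrite sigma_add sigma_mul IH comp_poly_MXaddC sC.
set d := (size (sigma 'X)).-1 in sigma_deg.
have ssize : forall p, (size (sigma p)).-1 = ((size p).-1 * d)%N.
  by move=> p; rewrite scomp size_comp_poly.
have siter : forall n p, (size (iter n sigma p)).-1 = ((size p).-1 * d ^ n)%N.
  elim=> [|n IH] p; first by rewrite muln1.
  by rewrite iterS ssize IH expnS -mulnA (mulnC _ d).
have cx : forall q j, (ore_xmul sigma delta q)`_j =
    (if j == 0%N then 0 else sigma q`_j.-1) + delta q`_j.
  by move=> q j; rewrite /ore_xmul coefD coefXM !coef_map_id0 //; case: eqP.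
have citer : forall i r, (forall j, (i < j)%N -> (iter i (ore_xmul sigma delta) r%:P)`_j = 0)
    /\ (iter i (ore_xmul sigma delta) r%:P)`_i = iter i sigma r.
  elim=> [|i IH] r; last have [IH1 IH2] := IH r.
    by split=> [[|j]//|]; rewrite /= coefC.
  split.
    case=> [//|j] hj; rewrite iterS cx /= IH1 // ?IH1 ?s0 ?d0 ?addr0 //.
    by lia.
  by rewrite iterS cx /= IH2 IH1 // d0 addr0.
move=> r; split.
- rewrite /ore_centralizer /ore_mul => H.
  have [->|rn0] := eqVneq r 0; first by exists 0; rewrite polyC0.
  rewrite size_polyC rn0 big_ord1 coefC /= in H.
  set n := (size P).-1 in hP.
  have hs : size P = n.+1 by rewrite /n in hP *; lia.
  have := congr1 (fun q : {poly {poly K}} => q`_n) H.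
  rewrite /= coefCM coef_sum; move: (size P) (hs) => m ->.
  rewrite big_ord_recr /= big1 => [|i _]; last first.
    by rewrite coefCM (proj1 (citer _ _)) ?mulr0.
  rewrite add0r coefCM (proj2 (citer _ _)).
  have Pn0 : P`_n != 0.
    have : lead_coef P != 0 by rewrite lead_coef_eq0 -size_poly_eq0 hs.
    by rewrite lead_coefE hs.
  rewrite [P`_n * _]mulrC => /(mulIf Pn0) Hr.
  have := siter n r; rewrite -Hr => Hm.
  have : (size r <= 1)%N.
    move: Hm hP sigma_deg; case: n {H hs Pn0 Hr} => [//|n'] Hm _ hd.
    have he : (0 < d ^ n')%N by rewrite expn_gt0; apply/orP; left; lia.
    rewrite expnS in Hm.
    have h2 : (2 <= d * d ^ n')%N by have := leq_mul hd he; rewrite muln1.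
    have : ((size r).-1 = 0)%N.
      by move: ((size r).-1) (d * d ^ n')%N h2 Hm => a E h2' Hm'; nia.
    by case: (size r) => [|[|k]].
  by move/size1_polyC => ->; exists r`_0.
- move=> [c ->].
  have it : forall i, iter i (ore_xmul sigma delta) c%:P%:P = c%:P%:P * 'X^i.
    elim=> [|i IH]; first by rewrite expr0 mulr1.
    rewrite iterS IH; apply/polyP => j.
    rewrite cx !coefCM !coefXn.
    have hm : forall b : bool, sigma (c%:P * b%:R) = c%:P * b%:R.
      by case; rewrite ?mulr1 ?mulr0 ?sC ?s0.
    have hd : forall b : bool, delta (c%:P * b%:R) = 0.
      by case; rewrite ?mulr1 ?mulr0 ?dC ?d0.
    rewrite hd addr0; case: j => [|j] /=; first by rewrite mulr0.
    by rewrite hm eqSS.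
  rewrite /ore_centralizer /ore_mul.
  under [RHS]eq_bigr => i _ do rewrite it mulrCA.
  rewrite -mulr_sumr.
  have -> : \sum_(i < size P) (P`_i)%:P * 'X^i = P.
    by rewrite -[RHS]coefK poly_def; apply: eq_bigr => i _; rewrite mul_polyC.
  have [->|cn0] := eqVneq c 0; first by rewrite !polyC0 size_poly0 big_ord0 mul0r.
  rewrite size_polyC polyC_eq0 cn0 big_ord1 /= coefC /=.
  by [].
Qed.
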